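(* Let $\rho=|\psi\rangle\langle\psi|$ be an $n$-qubit pure state, let $S\subseteq[n]$ be a non-empty set of qubit labels with $s:=|S|$, and let $U=\bigotimes_{i\in S}U_i$ (acting as the identity on qubits outside $S$), where the $U_i\in U(2)$ are independent Haar-random single-qubit unitaries. For $\mathbf{z}\in\{0,1\}^s$ let $P_U(\mathbf{z})=\operatorname{tr}\big(U\rho U^\dagger(|\mathbf{z}\rangle\langle\mathbf{z}|\otimes \mathbb{I}_{[n]\setminus S})\big)$ be the probability of obtaining the bitstring $\mathbf{z}$ when the qubits in $S$ are measured in the computational basis after applying $U$. Then for every fixed bitstring $\mathbf{z}\in\{0,1\}^s$, $$\mathcal{C}_{|\psi\rangle}(S)=1-3^s\,\mathbb{E}_U\big[P_U(\mathbf{z})^2\big],$$ where $\mathbb{E}_U$ denotes the average over the Haar measure.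
   Context: $[n]=\{1,\dots,n\}$ labels the qubits. For an $n$-qubit pure state $|\psi\rangle$ and a non-empty $S\subseteq[n]$ with $s=|S|$, the concentratable entanglement is $\mathcal{C}_{|\psi\rangle}(S)=1-\frac{1}{2^s}\sum_{\alpha\subseteq S}\operatorname{tr}(\rho_\alpha^2)$, where $\rho_\alpha$ is the reduced state of $|\psi\rangle\langle\psi|$ on the qubits in $\alpha$ (all others traced out), and $\operatorname{tr}(\rho_\emptyset^2):=1$. *)

(* Defs.v *)
From HB Require Import structures.
From mathcomp Require Import all_boot all_order all_algebra.
From mathcomp Require Import all_classical all_reals all_analysis.
From mathcomp Require Import complex.
Set Implicit Arguments. Unset Strict Implicit. Unset Printing Implicit Defensive.
Import Order.TTheory GRing.Theory Num.Theory.
Local Open Scope ring_scope.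

(* computational-basis labels of n qubits: bitstrings x : 'I_n -> bool *)
Definition bits (n : nat) := {ffun 'I_n -> bool}.

Section Quantum.
Variable R : realType.
Local Notation C := R[i].

Definition sqnorm (z : C) : R := complex.Re z ^+ 2 + complex.Im z ^+ 2.

(* the bit b as a row/column index of a single-qubit 2x2 matrix *)
Definition b2o (b : bool) : 'I_2 := if b then ord_max else ord0.

Variable n : nat.

Definition merge (alpha : {set 'I_n}) (a c : bits n) : bits n :=
  [ffun i => if i \in alpha then a i else c i].

(* bitstrings "living on" A: zero outside A (labels of the basis of qubits A) *)
Definition supp_in (A : {set 'I_n}) (x : bits n) : bool :=
  [forall i, (i \notin A) ==> ~~ x i].

(* reduced state rho_alpha = tr_{[n]\alpha} |psi><psi|, entry (a,b),
   with a, b bitstrings on alpha *)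
Definition reduced (psi : bits n -> C) (alpha : {set 'I_n}) (a b : bits n) : C :=
  \sum_(c : bits n | supp_in (~: alpha) c)
     psi (merge alpha a c) * (psi (merge alpha b c))^*.

(* tr(rho_alpha^2), with tr(rho_emptyset^2) := 1 *)
Definition purity (psi : bits n -> C) (alpha : {set 'I_n}) : C :=
  if alpha == finset.set0 then 1 else
  \sum_(a : bits n | supp_in alpha a) \sum_(b : bits n | supp_in alpha b)
     reduced psi alpha a b * reduced psi alpha b a.

Definition conc_ent (psi : bits n -> C) (S : {set 'I_n}) : C :=
  1 - (2 ^+ #|S|)^-1 * \sum_(alpha : {set 'I_n} | alpha \subset S) purity psi alpha.

(* (U psi)(x) for U = (tensor_{i in S} M i) tensor identity on [n]\S *)
Definition applyU (S : {set 'I_n}) (M : 'I_n -> 'M[C]_2) (psi : bits n -> C)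
    (x : bits n) : C :=
  \sum_(y : bits n)
     (\prod_(i < n) (if i \in S then M i (b2o (x i)) (b2o (y i))
                     else ((x i == y i)%:R : C))) * psi y.

(* P_U(z) = tr(U rho U^dagger (|z><z| (x) I_{[n]\S})): probability of outcome
   z (the bits of z at positions in S) when measuring the qubits of S *)
Definition probU (S : {set 'I_n}) (M : 'I_n -> 'M[C]_2) (psi : bits n -> C)
    (z : bits n) : R :=
  \sum_(x : bits n | [forall i, (i \in S) ==> (x i == z i)])
     sqnorm (applyU S M psi x).

End Quantum.

Section Haar.
Local Open Scope classical_set_scope.
Variable R : realType.
Local Notation C := R[i].

Definition unitary2 (M : 'M[C]_2) : Prop :=
  M *m (map_mx conjc M)^T = 1%:M.

(* real coordinates of a 2x2 complex matrix (embedding of U(2) into R^8) *)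
Definition mx_coords (M : 'M[C]_2) : 8.-tuple R :=
  [tuple complex.Re (M ord0 ord0); complex.Im (M ord0 ord0); complex.Re (M ord0 ord_max); complex.Im (M ord0 ord_max);
         complex.Re (M ord_max ord0); complex.Im (M ord_max ord0); complex.Re (M ord_max ord_max);
         complex.Im (M ord_max ord_max)].

(* U : Omega -> U(2) is a Haar-distributed random unitary: unitary-valued,
   measurable, and its law (on U(2) viewed inside R^8) is left-invariant
   (which characterises the Haar probability measure on the compact group U(2)). *)
Definition haar_unitary d (Omega : measurableType d) (P : probability Omega R)
    (U : Omega -> 'M[C]_2) : Prop :=
  [/\ forall w, unitary2 (U w),
      measurable_fun setT (mx_coords \o U) &
      forall V : 'M[C]_2, unitary2 V ->
        forall A : set (8.-tuple R), measurable A ->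
          P [set w | A (mx_coords (V *m U w))] = P [set w | A (mx_coords (U w))]].

Definition mutually_independent d (Omega : measurableType d) (P : probability Omega R)
    n (S : {set 'I_n}) (U : 'I_n -> Omega -> 'M[C]_2) : Prop :=
  forall A : 'I_n -> set (8.-tuple R), (forall i, measurable (A i)) ->
    P [set w | forall i, i \in S -> A i (mx_coords (U i w))] =
    (\prod_(i in S) P [set w | A i (mx_coords (U i w))])%E.

End Haar.

(* Main.v *)
Require Import Defs.
From HB Require Import structures.
From mathcomp Require Import all_boot all_order all_algebra.
From mathcomp Require Import all_classical all_reals all_analysis.
From mathcomp Require Import measurable_realfun.
From mathcomp Require Import complex.
From mathcomp Require Import ring lra.
Set Implicit Arguments. Unset Strict Implicit. Unset Printing Implicit Defensive.
Import Order.TTheory GRing.Theory Num.Theory.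
Local Open Scope ring_scope.

Section Part0.
Local Open Scope ring_scope.

Section Basic.
Variable R : realType.
Local Notation C := R[i].

Lemma conjcE (x : C) : conjc x = x^*.
Proof. by []. Qed.

Lemma sqnormE (x : C) : (sqnorm x)%:C%C = x * x^*.
Proof.
case: x => a b; rewrite /sqnorm /=.
apply/eqP; rewrite eq_complex /=; apply/andP; split; apply/eqP; ring.
Qed.

Lemma sum_delta (T : finType) (m : T) (F : T -> C) :
  \sum_y ((y == m)%:R * F y) = F m.
Proof.
rewrite (bigD1 m) //= eqxx mul1r big1 ?addr0 // => y /negbTE ->; by rewrite mul0r.
Qed.

Lemma prod_ind (I : finType) (P : pred I) :
  \prod_i ((P i)%:R : C) = ([forall i, P i])%:R.
Proof.
case: (boolP [forall i, P i]) => [/forallP h|].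
  by rewrite big1 // => i _; rewrite h.
rewrite negb_forall => /existsP [i /negbTE hi].
by rewrite (bigD1 i) //= hi mul0r.
Qed.

Lemma exch4 (I J : finType) (F : I -> J -> J -> J -> J -> C) :
  \sum_a \sum_b1 \sum_b2 \sum_b3 \sum_b4 F a b1 b2 b3 b4 =
  \sum_b1 \sum_b2 \sum_b3 \sum_b4 \sum_a F a b1 b2 b3 b4.
Proof.
rewrite exchange_big; apply: eq_bigr => b1 _.
rewrite exchange_big; apply: eq_bigr => b2 _.
rewrite exchange_big; apply: eq_bigr => b3 _.
by rewrite exchange_big.
Qed.

Lemma exch6 (I J : finType) (F : I -> J -> J -> J -> J -> J -> J -> C) :
  \sum_a \sum_x1 \sum_x2 \sum_b1 \sum_b2 \sum_b3 \sum_b4 F a x1 x2 b1 b2 b3 b4 =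
  \sum_x1 \sum_x2 \sum_b1 \sum_b2 \sum_b3 \sum_b4 \sum_a F a x1 x2 b1 b2 b3 b4.
Proof.
rewrite exchange_big; apply: eq_bigr => x1 _.
rewrite exchange_big; apply: eq_bigr => x2 _.
by rewrite exch4.
Qed.

Lemma prod4_sum (I1 I2 I3 I4 : finType) (f : I1 -> C) (g : I2 -> C) (h : I3 -> C) (q : I4 -> C) :
  (\sum_i f i) * (\sum_j g j) * (\sum_k h k) * (\sum_l q l) =
  \sum_i \sum_j \sum_k \sum_l (f i * g j * h k * q l).
Proof.
rewrite !mulr_suml; apply: eq_bigr => i _ /=.
rewrite [f i * _]mulr_sumr !mulr_suml; apply: eq_bigr => j _ /=.
rewrite [f i * g j * _]mulr_sumr !mulr_suml; apply: eq_bigr => k _ /=.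
by rewrite mulr_sumr.
Qed.
End Basic.

End Part0.

Section Part1.
Local Open Scope ring_scope.

Section Design.
Variable R : realType.
Local Notation C := R[i].

Definition hh : R := 2^-1.
Definition Vent (k : 'I_6) (a b : 'I_2) : C :=
  match nat_of_ord k, nat_of_ord a, nat_of_ord b with
  | 0, 0, 0 => 1 | 0, 1, 1 => 1 | 0, _, _ => 0
  | 1, 0, 1 => 1 | 1, 1, 0 => 1 | 1, _, _ => 0
  | 2, 1, 1 => Complex (-hh) (-hh) | 2, _, _ => Complex hh hh
  | 3, 0, 1 => Complex (-hh) (-hh) | 3, _, _ => Complex hh hh
  | 4, 0, 1 => Complex (-hh) hh | 4, 1, 1 => Complex hh (-hh) | 4, _, _ => Complex hh hh
  | 5, 0, 1 => Complex hh (-hh) | 5, 1, 1 => Complex (-hh) hh | _, _, _ => Complex hh hh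
  end.

Definition Vk (k : 'I_6) : 'M[C]_2 := \matrix_(a, b) Vent k a b.

Lemma row_design (r j1 j2 j3 j4 : 'I_2) :
  \sum_(k < 6) Vent k r j1 * (Vent k r j2)^* * Vent k r j3 * (Vent k r j4)^*
  = ((j1 == j2) && (j3 == j4))%:R + ((j1 == j4) && (j3 == j2))%:R.
Proof.
rewrite !big_ord_recr big_ord0 /=.
case: r => [[|[|//]]] ?; case: j1 => [[|[|//]]] ?; case: j2 => [[|[|//]]] ?;
case: j3 => [[|[|//]]] ?; case: j4 => [[|[|//]]] ?; rewrite /Vent /=.
all: apply/eqP; rewrite eq_complex /= /hh; apply/andP; split; apply/eqP; field.
all: try done.
Qed.

Lemma Vk_unitary k : unitary2 (Vk k).
Proof.
rewrite /unitary2; apply/matrixP => a b; rewrite !mxE !big_ord_recr big_ord0 /= !mxE.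
case: k => [[|[|[|[|[|[|//]]]]]]] ?; case: a => [[|[|//]]] ?; case: b => [[|[|//]]] ?;
rewrite /Vent /=.
all: apply/eqP; rewrite eq_complex /= /hh; apply/andP; split; apply/eqP; field.
all: try done.
Qed.

Definition ip (M : 'M[C]_2) (a b : 'I_2) : C := \sum_j (M j a)^* * M j b.

Lemma designM (M : 'M[C]_2) (r p1 p2 p3 p4 : 'I_2) :
  \sum_(k < 6) (Vk k *m M) r p1 * ((Vk k *m M) r p2)^* * (Vk k *m M) r p3
     * ((Vk k *m M) r p4)^*
  = ip M p2 p1 * ip M p4 p3 + ip M p4 p1 * ip M p2 p3.
Proof.
under eq_bigr do rewrite !mxE !rmorph_sum /= prod4_sum.
rewrite exch4.
transitivity (\sum_(j1 < 2) \sum_(j2 < 2) \sum_(j3 < 2) \sum_(j4 < 2)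
  ((((j1 == j2) && (j3 == j4))%:R + ((j1 == j4) && (j3 == j2))%:R) *
   (M j1 p1 * (M j2 p2)^* * M j3 p3 * (M j4 p4)^*))).
  do 4! (apply: eq_bigr => ? _).
  rewrite -(row_design r) mulr_suml; apply: eq_bigr => k _.
  rewrite !mxE !rmorphM /=; ring.
rewrite /ip !big_ord_recr !big_ord0 /= !add0r.
ring.
Qed.

Lemma ip_unitary (M : 'M[C]_2) : unitary2 M -> forall a b, ip M a b = (a == b)%:R.
Proof.
move=> /mulmx1C hM a b.
have := congr1 (fun A : 'M[C]_2 => A a b) hM; rewrite !mxE => <-.
by apply: eq_bigr => j _; rewrite !mxE.
Qed.

End Design.

End Part1.

Section Part2.
Local Open Scope ring_scope.

Section Expand.
Variable R : realType.
Local Notation C := R[i].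
Variable n : nat.
Variables (S : {set 'I_n}) (psi : bits n -> C) (z : bits n).

Definition Kf (M : 'I_n -> 'M[C]_2) i (a b : bool) : C :=
  if i \in S then M i (b2o a) (b2o b) else (a == b)%:R.
Definition ind i (a : bool) : C := if i \in S then (a == z i)%:R else 1.
Definition Lf M i (a a' b1 b2 b3 b4 : bool) : C :=
  ind i a * ind i a' * (Kf M i a b1 * (Kf M i a b2)^* * Kf M i a' b3 * (Kf M i a' b4)^*).
Definition wgt (y1 y2 y3 y4 : bits n) : C := psi y1 * (psi y2)^* * psi y3 * (psi y4)^*.

Lemma prob_C M : (probU S M psi z)%:C%C =
  \sum_(x : bits n) \sum_(y1 : bits n) \sum_(y2 : bits n) ((\prod_i ind i (x i)) *
    ((\prod_i Kf M i (x i) (y1 i)) * psi y1 * ((\prod_i (Kf M i (x i) (y2 i))^*) * (psi y2)^*))).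
Proof.
rewrite /probU rmorph_sum big_mkcond /=; apply: eq_bigr => x _.
have -> : \prod_i ind i (x i) = ([forall i, (i \in S) ==> (x i == z i)])%:R.
  rewrite -prod_ind; apply: eq_bigr => i _; rewrite /ind; by case: (i \in S).
under eq_bigr => y1 _ do rewrite -mulr_sumr.
rewrite -mulr_sumr; case: ifP => _; last by rewrite mul0r.
rewrite mul1r sqnormE /applyU rmorph_sum /= mulr_suml; apply: eq_bigr => y1 _.
rewrite mulr_sumr; apply: eq_bigr => y2 _.
by rewrite rmorphM rmorph_prod.
Qed.

Lemma probU_sq M : ((probU S M psi z) ^+ 2)%:C%C =
  \sum_(x : bits n) \sum_(x' : bits n) \sum_(y1 : bits n) \sum_(y2 : bits n) \sum_(y3 : bits n) \sum_(y4 : bits n)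
    (\prod_i Lf M i (x i) (x' i) (y1 i) (y2 i) (y3 i) (y4 i)) * wgt y1 y2 y3 y4.
Proof.
rewrite rmorphXn /= prob_C expr2 mulr_suml; apply: eq_bigr => x _.
rewrite mulr_sumr; apply: eq_bigr => x' _.
rewrite mulr_suml; apply: eq_bigr => y1 _.
rewrite mulr_suml; apply: eq_bigr => y2 _.
rewrite mulr_sumr; apply: eq_bigr => y3 _.
rewrite mulr_sumr; apply: eq_bigr => y4 _.
rewrite /Lf /wgt !big_split /=; ring.
Qed.


Definition Wk (k : {ffun 'I_n -> 'I_6}) (M : 'I_n -> 'M[C]_2) : 'I_n -> 'M[C]_2 :=
  fun i => Vk R (k i) *m M i.
Definition E1 (b1 b2 b3 b4 : bool) : C := ((b1 == b2) && (b3 == b4))%:R.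
Definition E2 (b1 b2 b3 b4 : bool) : C := ((b1 == b4) && (b3 == b2))%:R.
Definition mu i b1 b2 b3 b4 : C :=
  if i \in S then E1 b1 b2 b3 b4 + E2 b1 b2 b3 b4 else 6 * E1 b1 b2 b3 b4.

Lemma sum_bool (F : bool -> C) : \sum_(a : bool) F a = F true + F false.
Proof. by rewrite big_bool. Qed.

Lemma b2o_eq a b : (b2o a == b2o b) = (a == b).
Proof. by case: a; case: b. Qed.

Lemma local_sum M (hM : forall i, i \in S -> unitary2 (M i)) i b1 b2 b3 b4 :
  \sum_(a : bool) \sum_(a' : bool) \sum_(k < 6)
     Lf (fun j => Vk R k *m M j) i a a' b1 b2 b3 b4 = mu i b1 b2 b3 b4.
Proof.
rewrite /Lf /Kf /ind /mu; case: (boolP (i \in S)) => hi.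
  under eq_bigr => a _ do under eq_bigr => a' _ do rewrite -mulr_sumr -mulrA.
  under eq_bigr => a _ do rewrite -mulr_sumr.
  rewrite sum_delta sum_delta designM !ip_unitary; try by apply: hM.
  rewrite /E1 /E2.
  case: b1; case: b2; case: b3; case: b4; rewrite /b2o /= ?mulr1 ?mul1r ?mulr0 ?mul0r ?addr0 ?add0r; reflexivity.
transitivity (\sum_(a : bool) (a == b1)%:R * ((a == b2)%:R * \sum_(a' : bool) (a' == b3)%:R * ((a' == b4)%:R * (6 : C)))).
  apply: eq_bigr => a _; rewrite !mulr_sumr; apply: eq_bigr => a' _.
  rewrite sumr_const card_ord !rmorph_nat /=; rewrite -[_ *+ 6]mulr_natr; ring.
rewrite sum_delta sum_delta /E1.
case: b1; case: b2; case: b3; case: b4; rewrite /= ?mulr1 ?mul1r ?mulr0 ?mul0r; reflexivity.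
Qed.

Lemma exch2_4 (J : finType) (F : J -> J -> J -> J -> J -> J -> C) :
  \sum_x1 \sum_x2 \sum_b1 \sum_b2 \sum_b3 \sum_b4 F x1 x2 b1 b2 b3 b4 =
  \sum_b1 \sum_b2 \sum_b3 \sum_b4 \sum_x1 \sum_x2 F x1 x2 b1 b2 b3 b4.
Proof.
under eq_bigr => x1 _ do rewrite exch4.
by rewrite exch4.
Qed.

Lemma sum2_prod (H : 'I_n -> bool -> bool -> C) :
  \sum_(x : bits n) \sum_(x' : bits n) \prod_i H i (x i) (x' i) =
  \prod_i \sum_(a : bool) \sum_(a' : bool) H i a a'.
Proof.
rewrite bigA_distr_bigA; apply: eq_bigr => x _.
by rewrite bigA_distr_bigA.
Qed.

Lemma avg_sq M (hM : forall i, i \in S -> unitary2 (M i)) :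
  \sum_(k : {ffun 'I_n -> 'I_6}) ((probU S (Wk k M) psi z) ^+ 2)%:C%C =
  \sum_(y1 : bits n) \sum_(y2 : bits n) \sum_(y3 : bits n) \sum_(y4 : bits n)
    (\prod_i mu i (y1 i) (y2 i) (y3 i) (y4 i)) * wgt y1 y2 y3 y4.
Proof.
under eq_bigr do rewrite probU_sq.
rewrite exch6.
transitivity (\sum_(x : bits n) \sum_(x' : bits n) \sum_(y1 : bits n) \sum_(y2 : bits n)
   \sum_(y3 : bits n) \sum_(y4 : bits n)
   (\prod_i \sum_(k < 6) Lf (fun j => Vk R k *m M j) i (x i) (x' i) (y1 i) (y2 i) (y3 i) (y4 i))
   * wgt y1 y2 y3 y4).
  do 6! (apply: eq_bigr => ? _).
  rewrite -mulr_suml bigA_distr_bigA; congr (_ * _).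
  try (apply: eq_bigr => k _; apply: eq_bigr => i _; reflexivity).
rewrite exch2_4; apply: eq_bigr => y1 _; apply: eq_bigr => y2 _; apply: eq_bigr => y3 _; apply: eq_bigr => y4 _.
match goal with |- _ = ?P * ?W =>
  transitivity ((\sum_(x : bits n) \sum_(x' : bits n)
   \prod_i \sum_(k < 6) Lf (fun j => Vk R k *m M j) i (x i) (x' i) (y1 i) (y2 i) (y3 i) (y4 i)) * W) end.
  rewrite mulr_suml; apply: eq_bigr => x _; by rewrite mulr_suml.
congr (_ * _).
rewrite (sum2_prod (fun i a a' => \sum_(k < 6) Lf (fun j => Vk R k *m M j) i a a' (y1 i) (y2 i) (y3 i) (y4 i))); apply: eq_bigr => i _.
by rewrite local_sum.
Qed.

End Expand.

End Part2.

Section Part3.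
Local Open Scope ring_scope.

Section Purity.
Variable R : realType.
Local Notation C := R[i].
Variable n : nat.
Variable psi : bits n -> C.
Local Notation merge := Defs.merge.

Definition restr (A : {set 'I_n}) (x : bits n) : bits n := [ffun i => (i \in A) && x i].

Lemma merge_restr (A : {set 'I_n}) (u v : bits n) : merge A (restr A u) (restr (~: A) v) = merge A u v.
Proof. by apply/ffunP => i; rewrite !ffunE finset.in_setC; case: (i \in A). Qed.

Lemma merge_id (A : {set 'I_n}) (u : bits n) : merge A u u = u.
Proof. by apply/ffunP => i; rewrite !ffunE; case: (i \in A). Qed.

Lemma merge0 (u v : bits n) : merge finset.set0 u v = v.
Proof. by apply/ffunP => i; rewrite !ffunE finset.in_set0. Qed.

Lemma split_sum (A : {set 'I_n}) (F : bits n -> bits n -> C) :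
  \sum_(a | supp_in A a) \sum_(c | supp_in (~: A) c) F a c =
  \sum_(x : bits n) F (restr A x) (restr (~: A) x).
Proof.
rewrite pair_big /=.
rewrite (reindex (fun x : bits n => (restr A x, restr (~: A) x))) /=.
  apply: eq_bigl => x; apply/andP; split; apply/forallP => i; apply/implyP;
  by rewrite ffunE => /negbTE ->.
exists (fun p : bits n * bits n => merge A p.1 p.2) => [x _|[a c]].
  by rewrite /= merge_restr merge_id.
rewrite inE /= => /andP [/forallP ha /forallP hc].
congr (_, _); apply/ffunP => i; rewrite !ffunE ?finset.in_setC.
  case: (boolP (i \in A)) => //= hi; have := ha i; rewrite hi /=; by case: (a i).
case: (boolP (i \in A)) => //= hi; have := hc i; rewrite finset.in_setC hi /=; by case: (c i).
Qed.

Hypothesis hnorm : \sum_(x : bits n) sqnorm (psi x) = 1.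

Lemma norm1 : \sum_(x : bits n) psi x * (psi x)^* = 1.
Proof.
have := congr1 (fun r : R => r%:C%C) hnorm; rewrite rmorph_sum rmorph1 /= => <-.
by apply: eq_bigr => x _; rewrite sqnormE.
Qed.

Lemma reducedE (A : {set 'I_n}) a b : reduced psi A a b =
  \sum_(c | supp_in (~: A) c) psi (merge A a c) * (psi (merge A b c))^*.
Proof. by []. Qed.

Lemma purity_swap (A : {set 'I_n}) : purity psi A =
  \sum_(x : bits n) \sum_(x' : bits n)
     psi x * (psi (merge A x' x))^* * psi x' * (psi (merge A x x'))^*.
Proof.
rewrite /purity; case: ifP => [/eqP -> | _].
  under eq_bigr do under eq_bigr do rewrite !merge0.
  rewrite -[LHS]mulr1 -{1}norm1 -norm1 mulr_suml; apply: eq_bigr => x _.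
  rewrite mulr_sumr; apply: eq_bigr => x' _; ring.
transitivity (\sum_(a | supp_in A a) \sum_(c | supp_in (~: A) c)
   \sum_(b | supp_in A b) \sum_(c' | supp_in (~: A) c')
   psi (merge A a c) * (psi (merge A b c))^* * psi (merge A b c') * (psi (merge A a c'))^*).
  apply: eq_bigr => a _; rewrite exchange_big /=; apply: eq_bigr => c _.
  rewrite !reducedE mulr_suml; apply: eq_bigr => b _.
  rewrite mulr_sumr; apply: eq_bigr => c' _; ring.
rewrite (split_sum A (fun a c => \sum_(b | supp_in A b) \sum_(c' | supp_in (~: A) c')
   psi (merge A a c) * (psi (merge A b c))^* * psi (merge A b c') * (psi (merge A a c'))^*)).
apply: eq_bigr => x _.
rewrite (split_sum A (fun b c' =>
   psi (merge A (restr A x) (restr (~: A) x)) * (psi (merge A b (restr (~: A) x)))^*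
   * psi (merge A b c') * (psi (merge A (restr A x) c'))^*)).
apply: eq_bigr => x' _.
by rewrite !merge_restr !merge_id.
Qed.


Definition ee (A : {set 'I_n}) i (b1 b2 b3 b4 : bool) : C :=
  if i \in A then E2 R b1 b2 b3 b4 else E1 R b1 b2 b3 b4.

Lemma prod_e (A : {set 'I_n}) (y1 y2 y3 y4 : bits n) :
  \prod_i ee A i (y1 i) (y2 i) (y3 i) (y4 i) =
  (y2 == merge A y3 y1)%:R * (y4 == merge A y1 y3)%:R.
Proof.
rewrite -natrM mulnb.
transitivity (\prod_i ((if i \in A then (y1 i == y4 i) && (y3 i == y2 i)
                        else (y1 i == y2 i) && (y3 i == y4 i))%:R : C)).
  by apply: eq_bigr => i _; rewrite /ee; case: (i \in A).
rewrite prod_ind; congr (_%:R); congr (nat_of_bool _).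
apply/idP/idP => [/forallP h|/andP[/eqP e2 /eqP e4]].
  apply/andP; split; apply/eqP/ffunP => i; rewrite ffunE; have := h i;
  by case: (i \in A) => /andP [/eqP h1 /eqP h2].
by apply/forallP => i; rewrite e2 e4 !ffunE; case: (i \in A); rewrite !eqxx.
Qed.

Lemma purity_ys (A : {set 'I_n}) : purity psi A =
  \sum_(y1 : bits n) \sum_(y2 : bits n) \sum_(y3 : bits n) \sum_(y4 : bits n)
    (\prod_i ee A i (y1 i) (y2 i) (y3 i) (y4 i)) * wgt psi y1 y2 y3 y4.
Proof.
rewrite purity_swap; apply: eq_bigr => y1 _.
rewrite exchange_big; apply: eq_bigr => y3 _ /=.
transitivity (\sum_(y2 : bits n) (y2 == merge A y3 y1)%:R *
   \sum_(y4 : bits n) (y4 == merge A y1 y3)%:R * wgt psi y1 y2 y3 y4).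
  by rewrite sum_delta sum_delta.
apply: eq_bigr => y2 _; rewrite mulr_sumr; apply: eq_bigr => y4 _.
by rewrite prod_e mulrA.
Qed.

End Purity.

Section Subsets.
Variable R : realType.
Local Notation C := R[i].
Variable n : nat.

Lemma sum_subsets (S : {set 'I_n}) (f g : 'I_n -> C) :
  \sum_(A : {set 'I_n} | A \subset S) \prod_i (if i \in A then g i else f i) =
  \prod_i (if i \in S then f i + g i else f i).
Proof.
transitivity (\prod_i ((if i \in S then g i else 0) + f i)).
  rewrite bigA_distr big_mkcond /=; apply: eq_bigr => A _.
  case: ifP => [/fintype.subsetP sub | /negbT]; first by apply: eq_bigr => i _; case: ifP => // /sub ->.
  case/fintype.subsetPn => i iA iS; rewrite (bigD1 i) //= iA (negbTE iS) mul0r //.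
by apply: eq_bigr => i _; case: (i \in S); rewrite ?add0r // addrC.
Qed.

End Subsets.

End Part3.

Section Part4.
Local Open Scope ring_scope.

Section Main.
Variable R : realType.
Local Notation C := R[i].
Variable n : nat.

Lemma exch4P (I J : finType) (P : pred I) (F : I -> J -> J -> J -> J -> C) :
  \sum_(a | P a) \sum_b1 \sum_b2 \sum_b3 \sum_b4 F a b1 b2 b3 b4 =
  \sum_b1 \sum_b2 \sum_b3 \sum_b4 \sum_(a | P a) F a b1 b2 b3 b4.
Proof.
rewrite exchange_big; apply: eq_bigr => b1 _.
rewrite exchange_big; apply: eq_bigr => b2 _.
rewrite exchange_big; apply: eq_bigr => b3 _.
by rewrite exchange_big.
Qed.

Lemma prod6 (S : {set 'I_n}) :
  \prod_i (if i \in S then 1 else 6 : C) = 6 ^+ #|~: S|.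
Proof.
transitivity (\prod_(i in ~: S) (6 : C)); last by rewrite prodr_const.
rewrite [RHS]big_mkcond; apply: eq_bigr => i _; rewrite finset.in_setC.
by case: (i \in S).
Qed.

Theorem alg_main (psi : bits n -> C) (S : {set 'I_n}) (z : bits n) (M : 'I_n -> 'M[C]_2) :
  \sum_(x : bits n) sqnorm (psi x) = 1 ->
  (forall i, i \in S -> unitary2 (M i)) ->
  conc_ent psi S = ((1 - 3 ^+ #|S| * ((6 ^+ n)^-1 *
     \sum_(k : {ffun 'I_n -> 'I_6}) (probU S (Wk k M) psi z) ^+ 2))%:C)%C.
Proof.
move=> hnorm hM.
set P := \sum_(A : {set 'I_n} | A \subset S) purity psi A.
have key : (\sum_(k : {ffun 'I_n -> 'I_6}) (probU S (Wk k M) psi z) ^+ 2)%:C%C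
           = 6 ^+ #|~: S| * P.
  have -> : P = \sum_(A : {set 'I_n} | A \subset S)
     \sum_(y1 : bits n) \sum_(y2 : bits n) \sum_(y3 : bits n) \sum_(y4 : bits n)
    (\prod_i ee R A i (y1 i) (y2 i) (y3 i) (y4 i)) * wgt psi y1 y2 y3 y4.
    by apply: eq_bigr => A _; rewrite (purity_ys hnorm).
  rewrite rmorph_sum avg_sq //.
  rewrite exch4P mulr_sumr; apply: eq_bigr => y1 _.
  rewrite mulr_sumr; apply: eq_bigr => y2 _.
  rewrite mulr_sumr; apply: eq_bigr => y3 _.
  rewrite mulr_sumr; apply: eq_bigr => y4 _.
  rewrite -mulr_suml mulrA; congr (_ * _).
  transitivity (\prod_i ((if i \in S then 1 else 6 : C) *
     (if i \in S then E1 R (y1 i) (y2 i) (y3 i) (y4 i) + E2 R (y1 i) (y2 i) (y3 i) (y4 i)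
      else E1 R (y1 i) (y2 i) (y3 i) (y4 i)))).
    by apply: eq_bigr => i _; rewrite /mu; case: (i \in S); rewrite ?mul1r.
  rewrite big_split /= prod6; congr (_ * _).
  rewrite -(sum_subsets S (fun i => E1 R (y1 i) (y2 i) (y3 i) (y4 i))
                          (fun i => E2 R (y1 i) (y2 i) (y3 i) (y4 i))).
  by apply: eq_bigr => A _; apply: eq_bigr => i _.
rewrite rmorphB rmorph1 !rmorphM /= rmorphXn fmorphV rmorphXn !rmorph_nat key.
rewrite /conc_ent -/P.
have hc : (#|S| + #|~: S| = n)%N by rewrite cardsC card_ord.
have -> : (6 : C) ^- n = (6 ^+ #|S| * 6 ^+ #|~: S|)^-1 by rewrite -exprD hc.
rewrite (_ : (6 : C) = 2 * 3) ?exprMn; last by rewrite -natrM.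
have h2 : (2 : C) ^+ #|S| != 0 by rewrite expf_neq0 // pnatr_eq0.
have h3 : (3 : C) ^+ #|S| != 0 by rewrite expf_neq0 // pnatr_eq0.
have h2' : (2 : C) ^+ #|~: S| != 0 by rewrite expf_neq0 // pnatr_eq0.
have h3' : (3 : C) ^+ #|~: S| != 0 by rewrite expf_neq0 // pnatr_eq0.
field.
by rewrite h2 h3 h2' h3'.
Qed.

End Main.

End Part4.

Section Part5.
Local Open Scope classical_set_scope.
Local Open Scope ring_scope.

Section LawEq.
Context d d' (Omega : measurableType d) (T : measurableType d') (R : realType)
  (P : probability Omega R) (n : nat).

Definition rect (A : 'I_n -> set T) : set (n.-tuple T) := [set t | forall i, A i (tnth t i)].
Definition rects : set (set (n.-tuple T)) :=
  [set B | exists A : 'I_n -> set T, (forall i, measurable (A i)) /\ B = rect A].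

Lemma rect_measurable A : (forall i, measurable (A i)) -> measurable (rect A).
Proof.
move=> mA.
have -> : rect A = \bigcap_(i in [set: 'I_n]) ((fun t : n.-tuple T => tnth t i) @^-1` A i).
  by apply/seteqP; split => t /= h i; [move=> _|]; apply: h.
apply: fin_bigcap_measurable; first exact: finite_finset.
move=> i _; rewrite -[X in measurable X]setTI; exact: measurable_tnth.
Qed.

Lemma measurable_rects : measurable `<=` <<s rects >>.
Proof.
move=> B mB.
have : g_sigma_preimage (fun i (x : n.-tuple T) => tnth x i) B := mB.
apply: smallest_sub.
  exact: smallest_sigma_algebra.
move=> C; rewrite -bigcup_seq /= => -[i _ [Y mY <-]].
apply: sub_sigma_algebra; exists (fun j => if j == i then Y else setT); split.
  by move=> j; case: ifP.
apply/seteqP; split => t /=.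
  by move=> [_ hY] j; case: ifP => // /eqP ->.
by move=> h; split => //; have := h i; rewrite eqxx.
Qed.

Definition Tn : measurableType (measure_tuple_display d') := n.-tuple T.

Lemma law_eq (X Y : {mfun Omega >-> Tn}) :
  (forall A, (forall i, measurable (A i)) -> P (X @^-1` rect A) = P (Y @^-1` rect A)) ->
  forall f : Tn -> \bar R, measurable_fun setT f -> (forall y : Tn, (0 <= f y)%E) ->
  (\int[P]_w f (X w) = \int[P]_w f (Y w))%E.
Proof.
move=> hXY f mf f0.
rewrite -[LHS](@ge0_integral_distribution _ _ _ Tn _ P X f) //.
rewrite -[RHS](@ge0_integral_distribution _ _ _ Tn _ P Y f) //.
apply: eq_measure_integral => B mB _.
have Gm : rects `<=` measurable by move=> _ [A [mA ->]]; exact: rect_measurable.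
apply: (g_sigma_algebra_measure_unique rects Gm (fun _ => setT)).
- by move=> _; exists (fun _ => setT); split => //; apply/seteqP; split.
- by apply/seteqP; split => // t _; exists 0%N.
- move=> _ _ [A [mA ->]] [A' [mA' ->]]; exists (fun i => A i `&` A' i); split.
    by move=> i; apply: measurableI.
  by apply/seteqP; split => t /=; [move=> [h h'] i; split|move=> h; split => i; case: (h i)].
- by move=> _ [A [mA ->]]; exact: hXY.
- move=> k; change (P (X @^-1` setT) < +oo)%E.
  by rewrite preimage_setT probability_setT ltry.
- exact: measurable_rects.
Qed.

End LawEq.

End Part5.

Section Part6.
Local Open Scope classical_set_scope.
Local Open Scope ring_scope.

Section CMeas.
Variable R : realType.
Local Notation C := R[i].
Context d (T0 : measurableType d).

Definition cmeas (f : T0 -> C) :=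
  measurable_fun setT (fun t => complex.Re (f t)) /\ measurable_fun setT (fun t => complex.Im (f t)).

Lemma ReD (x y : C) : complex.Re (x + y) = complex.Re x + complex.Re y.
Proof. by case: x; case: y. Qed.
Lemma ImD (x y : C) : complex.Im (x + y) = complex.Im x + complex.Im y.
Proof. by case: x; case: y. Qed.
Lemma ReM (x y : C) : complex.Re (x * y) = complex.Re x * complex.Re y - complex.Im x * complex.Im y.
Proof. by case: x; case: y. Qed.
Lemma ImM (x y : C) : complex.Im (x * y) = complex.Re x * complex.Im y + complex.Im x * complex.Re y.
Proof. by case: x => a b; case: y => c e /=; rewrite addrC. Qed.
Lemma ReJ (x : C) : complex.Re (x^*) = complex.Re x.
Proof. by case: x. Qed.
Lemma ImJ (x : C) : complex.Im (x^*) = - complex.Im x.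
Proof. by case: x. Qed.

Lemma cm_cst (c : C) : cmeas (fun _ => c).
Proof. by split; exact: measurable_cst. Qed.

Lemma cm_add f g : cmeas f -> cmeas g -> cmeas (fun t => f t + g t).
Proof.
move=> [f1 f2] [g1 g2]; split.
  by under eq_fun do rewrite ReD; exact: measurable_funD.
by under eq_fun do rewrite ImD; exact: measurable_funD.
Qed.

Lemma cm_mul f g : cmeas f -> cmeas g -> cmeas (fun t => f t * g t).
Proof.
move=> [f1 f2] [g1 g2]; split.
  by under eq_fun do rewrite ReM; apply: measurable_funB; exact: measurable_funM.
by under eq_fun do rewrite ImM; apply: measurable_funD; exact: measurable_funM.
Qed.

Lemma cm_conj f : cmeas f -> cmeas (fun t => (f t)^*).
Proof.
move=> [f1 f2]; split.
  by under eq_fun do rewrite ReJ.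
by under eq_fun do rewrite ImJ; exact: measurable_funN.
Qed.

Lemma cm_sum (I : Type) (s : seq I) (P : pred I) (F : I -> T0 -> C) :
  (forall i, cmeas (F i)) -> cmeas (fun t => \sum_(i <- s | P i) F i t).
Proof.
move=> hF; elim: s => [|a s IH].
  by under eq_fun do rewrite big_nil; exact: cm_cst.
under eq_fun do rewrite big_cons.
by case: (P a) => //; apply: cm_add.
Qed.

Lemma cm_prod (I : Type) (s : seq I) (P : pred I) (F : I -> T0 -> C) :
  (forall i, cmeas (F i)) -> cmeas (fun t => \prod_(i <- s | P i) F i t).
Proof.
move=> hF; elim: s => [|a s IH].
  by under eq_fun do rewrite big_nil; exact: cm_cst.
under eq_fun do rewrite big_cons.
by case: (P a) => //; apply: cm_mul.
Qed.

Lemma cm_complex (a b : T0 -> R) : measurable_fun setT a -> measurable_fun setT b ->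
  cmeas (fun t => Complex (a t) (b t)).
Proof. by move=> ma mb; split. Qed.

Lemma rm_sum (I : Type) (s : seq I) (P : pred I) (F : I -> T0 -> R) :
  (forall i, measurable_fun setT (F i)) -> measurable_fun setT (fun t => \sum_(i <- s | P i) F i t).
Proof.
move=> hF; elim: s => [|a s IH].
  by under eq_fun do rewrite big_nil; exact: measurable_cst.
under eq_fun do rewrite big_cons.
by case: (P a) => //; apply: measurable_funD.
Qed.

Lemma rm_sqnorm f : cmeas f -> measurable_fun setT (fun t => sqnorm (f t)).
Proof.
move=> [f1 f2]; rewrite /sqnorm; apply: measurable_funD; apply: measurable_funX => //.
Qed.

End CMeas.

Section Coords.
Variable R : realType.
Local Notation C := R[i].

Definition crd (t : 8.-tuple R) (k : nat) : R := tnth t (inord k).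
Definition of_coords (t : 8.-tuple R) : 'M[C]_2 :=
  \matrix_(a, b) Complex (crd t (4 * a + 2 * b)%N) (crd t (4 * a + 2 * b + 1)%N).

Lemma of_coordsK (M : 'M[C]_2) : of_coords (mx_coords M) = M.
Proof.
have E : forall x : C, Complex (complex.Re x) (complex.Im x) = x by case.
apply/matrixP => a b; rewrite mxE /crd.
case: a => [[|[|//]]] pa; case: b => [[|[|//]]] pb; rewrite !(tnth_nth 0) !inordK //= E;
  congr (M _ _); exact: val_inj.
Qed.

Context d (T0 : measurableType d).

Lemma mx_coords_meas (F : T0 -> 'M[C]_2) :
  (forall a b, cmeas (fun t => F t a b)) -> measurable_fun setT (fun t => mx_coords (F t)).
Proof.
move=> hF; apply/measurable_fun_tnthP => j.
case: j => [[|[|[|[|[|[|[|[|//]]]]]]]] pj];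
  rewrite /comp; under eq_fun do rewrite (tnth_nth 0) /=.
- exact: (hF ord0 ord0).1.
- exact: (hF ord0 ord0).2.
- exact: (hF ord0 ord_max).1.
- exact: (hF ord0 ord_max).2.
- exact: (hF ord_max ord0).1.
- exact: (hF ord_max ord0).2.
- exact: (hF ord_max ord_max).1.
- exact: (hF ord_max ord_max).2.
Qed.

Lemma cm_of_coords (g : T0 -> 8.-tuple R) a b : measurable_fun setT g ->
  cmeas (fun t => of_coords (g t) a b).
Proof.
move=> mg; split; under eq_fun do rewrite mxE /= /crd;
  exact: (measurableT_comp (measurable_tnth _) mg).
Qed.

Lemma meas_probU n (S : {set 'I_n}) (psi : bits n -> C) (z : bits n)
  (Mf : T0 -> 'I_n -> 'M[C]_2) :
  (forall i a b, cmeas (fun t => Mf t i a b)) ->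
  measurable_fun setT (fun t => probU S (Mf t) psi z).
Proof.
move=> hM; rewrite /probU; apply: rm_sum => x; apply: rm_sqnorm.
rewrite /applyU; apply: cm_sum => y; apply: cm_mul; last exact: cm_cst.
apply: cm_prod => i; case: (i \in S); [exact: hM | exact: cm_cst].
Qed.

End Coords.

End Part6.

Section Part7.
Local Open Scope classical_set_scope.
Local Open Scope ring_scope.

Section Main.
Variable R : realType.
Local Notation C := R[i].
Local Notation T8 := (8.-tuple R).
Variable n : nat.
Variables (psi : bits n -> C) (S : {set 'I_n}) (z : bits n).
Context d (Omega : measurableType d) (P : probability Omega R) (U : 'I_n -> Omega -> 'M[C]_2).
Hypothesis hhaar : forall i, i \in S -> haar_unitary P (U i).
Hypothesis hind : mutually_independent P S U.

Local Notation Tn := (@Tn _ T8 n).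

Definition Lmap (V : 'M[C]_2) (t : T8) : T8 := mx_coords (V *m of_coords t).

Lemma Lmap_meas V : measurable_fun setT (Lmap V).
Proof.
apply: mx_coords_meas => a b; under eq_fun do rewrite mxE.
apply: cm_sum => l; apply: cm_mul; first exact: cm_cst.
exact: cm_of_coords.
Qed.

Lemma LmapE V M : Lmap V (mx_coords M) = mx_coords (V *m M).
Proof. by rewrite /Lmap of_coordsK. Qed.

Definition Xf (w : Omega) : Tn :=
  [tuple (if i \in S then mx_coords (U i w) else mx_coords 1%:M) | i < n].
Definition Xk (k : {ffun 'I_n -> 'I_6}) (w : Omega) : Tn :=
  [tuple (if i \in S then Lmap (Vk R (k i)) (mx_coords (U i w)) else mx_coords 1%:M) | i < n].

Lemma Xf_meas : measurable_fun setT Xf.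
Proof.
apply/measurable_fun_tnthP => i; rewrite /comp.
under eq_fun do rewrite tnth_mktuple.
case: (boolP (i \in S)) => hi; last exact: measurable_cst.
by case: (hhaar hi).
Qed.

Lemma Xk_meas k : measurable_fun setT (Xk k).
Proof.
apply/measurable_fun_tnthP => i; rewrite /comp.
under eq_fun do rewrite tnth_mktuple.
case: (boolP (i \in S)) => hi; last exact: measurable_cst.
case: (hhaar hi) => _ hm _.
exact: (measurableT_comp (Lmap_meas _) hm).
Qed.


Lemma rect_eq k (A : 'I_n -> set T8) : (forall i, measurable (A i)) ->
  P (Xf @^-1` rect A) = P (Xk k @^-1` rect A).
Proof.
move=> mA.
case: (pselect (forall i, i \notin S -> A i (mx_coords 1%:M))) => hc; last first.
  transitivity (P set0).
    congr (P _); apply/seteqP; split => w // h; apply: hc => i hi; have := h i.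
    by rewrite /Xf tnth_mktuple (negbTE hi).
  congr (P _); apply/seteqP; split => w // h; apply: hc => i hi; have := h i.
  by rewrite /Xk tnth_mktuple (negbTE hi).
pose A' := fun i => Lmap (Vk R (k i)) @^-1` A i.
have mA' : forall i, measurable (A' i).
  by move=> i; have := Lmap_meas (Vk R (k i)) measurableT (mA i); rewrite setTI.
transitivity (P [set w | forall i, i \in S -> A i (mx_coords (U i w))]).
  congr (P _); apply/seteqP; split => w h i.
    by move=> hi; have := h i; rewrite /Xf tnth_mktuple hi.
  rewrite /Xf tnth_mktuple; case: ifP => hi; [exact: h | apply: hc; exact: negbT].
transitivity (P [set w | forall i, i \in S -> A' i (mx_coords (U i w))]); last first.
  congr (P _); apply/seteqP; split => w h i.
    rewrite /Xk tnth_mktuple; case: ifP => hi; [exact: h | apply: hc; exact: negbT].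
  by move=> hi; have := h i; rewrite /Xk tnth_mktuple hi.
rewrite (hind mA) (hind mA'); apply: eq_bigr => i hi.
case: (hhaar hi) => _ _ hinv.
rewrite -(hinv (Vk R (k i)) (Vk_unitary R (k i)) (A i) (mA i)).
by congr (P _); apply/seteqP; split => w /=; rewrite /A' /= LmapE.
Qed.

Definition Gfun (t : Tn) : R := probU S (fun i => of_coords (tnth t i)) psi z ^+ 2.

Lemma Gfun_meas : measurable_fun setT Gfun.
Proof.
apply: measurable_funX; apply: meas_probU => i a b.
exact: cm_of_coords (measurable_tnth i).
Qed.

Lemma probU_ext (M M' : 'I_n -> 'M[C]_2) : (forall i, i \in S -> M i = M' i) ->
  probU S M psi z = probU S M' psi z.
Proof.
move=> h; rewrite /probU; apply: eq_bigr => x _; congr sqnorm.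
rewrite /applyU; apply: eq_bigr => y _; congr (_ * _); apply: eq_bigr => i _.
by case: ifP => // hi; rewrite h.
Qed.

Definition Fw (w : Omega) : R := probU S (fun i => U i w) psi z ^+ 2.
Definition Gk (k : {ffun 'I_n -> 'I_6}) (w : Omega) : R :=
  probU S (Wk k (fun i => U i w)) psi z ^+ 2.

Lemma FwE w : Fw w = Gfun (Xf w).
Proof.
rewrite /Fw /Gfun; congr (_ ^+ 2); apply: probU_ext => i hi.
by rewrite /Xf tnth_mktuple hi of_coordsK.
Qed.

Lemma GkE k w : Gk k w = Gfun (Xk k w).
Proof.
rewrite /Gk /Gfun; congr (_ ^+ 2); apply: probU_ext => i hi.
by rewrite /Xk tnth_mktuple hi LmapE of_coordsK.
Qed.

Lemma Fw_meas : measurable_fun setT Fw.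
Proof.
rewrite (_ : Fw = Gfun \o Xf); last by apply/funext => w; rewrite FwE.
exact: measurableT_comp Gfun_meas Xf_meas.
Qed.

Lemma Gk_meas k : measurable_fun setT (Gk k).
Proof.
rewrite (_ : Gk k = Gfun \o Xk k); last by apply/funext => w; rewrite GkE.
exact: measurableT_comp Gfun_meas (Xk_meas k).
Qed.

Lemma int_eq k : (\int[P]_w (Fw w)%:E = \int[P]_w (Gk k w)%:E)%E.
Proof.
pose Xm : {mfun Omega >-> Tn} := HB.pack Xf (isMeasurableFun.Build _ _ _ _ Xf Xf_meas).
pose Ym : {mfun Omega >-> Tn} := HB.pack (Xk k) (isMeasurableFun.Build _ _ _ _ (Xk k) (Xk_meas k)).
transitivity (\int[P]_w (fun t => (Gfun t)%:E) (Xm w))%E.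
  by apply: eq_integral => w _; rewrite FwE.
transitivity (\int[P]_w (fun t => (Gfun t)%:E) (Ym w))%E; last first.
  by apply: eq_integral => w _; rewrite GkE.
apply: (@law_eq _ _ Omega T8 R P n Xm Ym _ (fun t => (Gfun t)%:E)).
- by move=> A mA; exact: rect_eq.
- by apply/measurable_EFinP; exact: Gfun_meas.
- by move=> t; rewrite lee_fin sqr_ge0.
Qed.

End Main.

End Part7.

Section PartF.

Lemma lin_int (R : realType) d (Omega : measurableType d) (P : probability Omega R)
  (K : finType) (h : K -> Omega -> R) (c0 : R) : 0 <= c0 ->
  (forall k, measurable_fun setT (h k)) -> (forall k w, 0 <= h k w) ->
  (\int[P]_w ((c0 * \sum_k h k w)%:E) = c0%:E * \sum_k \int[P]_w (h k w)%:E)%E.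
Proof.
move=> c00 mh h0.
under eq_integral do rewrite EFinM.
rewrite ge0_integralZl_EFin //; first last.
- by apply/measurable_EFinP; apply: rm_sum.
- by move=> w _; rewrite lee_fin; apply: sumr_ge0 => k _.
congr (_ * _)%E.
under eq_integral do rewrite -sumEFin.
rewrite ge0_integral_sum //.
- by move=> k; apply/measurable_EFinP.
- by move=> k w _; rewrite lee_fin.
Qed.

Lemma const_of (R : realType) (T : Type) (f : T -> R) (a : R) (C0 : R[i]) :
  a != 0 -> (forall w, C0 = ((1 - a * f w)%:C)%C) -> forall w w0, f w = f w0.
Proof.
move=> ha h w w0.
have : ((1 - a * f w)%:C)%C = ((1 - a * f w0)%:C)%C by rewrite -!h.
case=> e; apply: (mulfI ha).
have E : forall x : R, x = 1 - (1 - x) by move=> x; ring.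
by rewrite (E (a * f w)) e -E.
Qed.

End PartF.

Unset Implicit Arguments. Set Strict Implicit. Set Printing Implicit Defensive.

Theorem proposition3 (R : realType) (n : nat) (psi : bits n -> R[i])
    (S : {set 'I_n}) (d : measure_display) (Omega : measurableType d)
    (P : probability Omega R) (U : 'I_n -> Omega -> 'M[R[i]]_2) (z : bits n) :
  \sum_(x : bits n) sqnorm (psi x) = 1 ->
  S != finset.set0 ->
  (forall i, i \in S -> haar_unitary P (U i)) ->
  mutually_independent P S U ->
  exists e : R,
    (\int[P]_w ((probU S (fun i => U i w) psi z) ^+ 2)%:E)%E = e%:E /\
    conc_ent psi S = ((1 - 3 ^+ #|S| * e)%:C)%C.
Proof.
move=> hnorm _ hhaar hind.
pose G k w := probU S (Wk k (fun i => U i w)) psi z ^+ 2.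
pose c w := (6 ^+ n)^-1 * \sum_(k : {ffun 'I_n -> 'I_6}) G k w.
have hcw : forall w, conc_ent psi S = ((1 - 3 ^+ #|S| * c w)%:C)%C.
  move=> w; apply: alg_main => // i hi.
  by case: (hhaar i hi).
have [w0 _] : exists w : Omega, True.
  case: (pselect (exists w : Omega, True)) => // hne.
  have hT : [set: Omega]%classic = set0.
    by apply/seteqP; split => // w _; apply: hne; exists w.
  have := probability_setT P; rewrite hT measure0 => -[] /eqP.
  by rewrite eq_sym oner_eq0.
exists (c w0); split; last exact: hcw.
have h3 : (3 : R) ^+ #|S| != 0 by rewrite expf_neq0 // pnatr_eq0.
have hc : forall w, c w = c w0 := fun w => @const_of R Omega c _ _ h3 hcw w w0.
pose F w := probU S (fun i => U i w) psi z ^+ 2.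
have h6 : (6 : R) ^+ n != 0 by rewrite expf_neq0 // pnatr_eq0.
have eqF : forall w, F w = (6 ^+ n)^-1 * \sum_(k : {ffun 'I_n -> 'I_6}) F w.
  move=> w; rewrite sumr_const card_ffun !card_ord -[F w *+ _]mulr_natl natrX mulrA mulVf //.
  by rewrite mul1r.
have mF : measurable_fun setT F by exact: (@Fw_meas R n psi S z d Omega P U hhaar).
have mG : forall k, measurable_fun setT (G k) by move=> k; exact: (@Gk_meas R n psi S z d Omega P U hhaar k).
transitivity (\int[P]_w (((6 ^+ n)^-1 * \sum_(k : {ffun 'I_n -> 'I_6}) F w)%:E))%E.
  by apply: eq_integral => w _; rewrite -eqF.
have c00 : 0 <= ((6 : R) ^+ n)^-1 by rewrite invr_ge0 exprn_ge0.
rewrite (@lin_int R d Omega P _ (fun _ => F) _ c00 (fun _ => mF) (fun _ w => sqr_ge0 _)).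
transitivity ((6 ^+ n)^-1%:E * \sum_(k : {ffun 'I_n -> 'I_6}) \int[P]_w (G k w)%:E)%E.
  congr (_ * _)%E; apply: eq_bigr => k _.
  exact: (@int_eq R n psi S z d Omega P U hhaar hind k).
rewrite -(@lin_int R d Omega P _ G _ c00 mG (fun _ w => sqr_ge0 _)).
transitivity (\int[P]_w (cst (c w0)%:E) w)%E.
  by apply: eq_integral => w _; rewrite -(hc w).
rewrite integral_cst //.
rewrite -[RHS]mule1; congr (_ * _)%E; exact: probability_setT.
Qed.
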